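(* Consider the mining game with $N\ge2$ miners, costs $0<c_1\le\dots\le c_N$, reward $R>0$ and capacity $\gamma\ge0$, at parameter values where the number $n$ of active miners does not change under small perturbations of the costs. For active miners $i\ne j$, the equilibrium profit $\pi_i^*$ of miner $i$ satisfies $$\frac{\partial\pi_i^*}{\partial c_i}<0,\qquad \frac{\partial\pi_i^*}{\partial c_j}>0.$$
   Context: Mining game: $N\ge2$ miners with costs-per-hash $0<c_1\le\dots\le c_N$; each miner $i$ chooses $h_i\ge0$, $H=\sum_jh_j$, payoff $\frac{h_i}{H}R-c_ih_i-\frac{\gamma}{2}h_i^2$ if $H>0$ and $0$ if $H=0$. The pure Nash equilibrium $h^*$ is unique; its active miners ($h_i^*>0$) are $1,\dots,n$ for some $2\le n\le N$, with $c^{(n)}=\sum_{i=1}^nc_i$, $H^*=\frac{\sqrt{(c^{(n)})^2+4(n-1)R\gamma}-c^{(n)}}{2\gamma}$ for $\gamma>0$ (and $(n-1)R/c^{(n)}$ for $\gamma=0$), and $h_i^*=H^*\frac{R-c_iH^*}{R+\gamma(H^* )^2}$ for $i\le n$. The equilibrium profit is $\pi_i^*=\frac{R}{H^*}h_i^*-c_ih_i^*-\frac{\gamma}{2}(h_i^* )^2$, and derivatives are taken of these closed-form expressions with $n$ held fixed. *)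

(* Defs.v *)
From Stdlib Require Import Reals Lra.
From Coquelicot Require Import Coquelicot.
Open Scope R_scope.

(* Miners are indexed 1..N; cost and hash profiles are functions nat -> R
   (only the values at 1..N matter). *)

Fixpoint sum1 (f : nat -> R) (n : nat) : R :=
  match n with
  | O => 0
  | S m => sum1 f m + f (S m)
  end.

Definition upd (f : nat -> R) (k : nat) (x : R) : nat -> R :=
  fun i => if Nat.eqb i k then x else f i.

Definition payoff (N : nat) (Rw gamma : R) (c h : nat -> R) (i : nat) : R :=
  let H := sum1 h N in
  if Rlt_dec 0 H then h i / H * Rw - c i * h i - gamma / 2 * (h i) ^ 2 else 0.

Definition is_NE (N : nat) (Rw gamma : R) (c h : nat -> R) : Prop :=
  forall i, (1 <= i <= N)%nat ->
    0 <= h i /\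
    forall x, 0 <= x -> payoff N Rw gamma c (upd h i x) i <= payoff N Rw gamma c h i.

(* closed-form equilibrium quantities, with the number n of active miners fixed *)
Definition Hstar (n : nat) (Rw gamma : R) (c : nat -> R) : R :=
  let cn := sum1 c n in
  if Rlt_dec 0 gamma
  then (sqrt (cn ^ 2 + 4 * (INR n - 1) * Rw * gamma) - cn) / (2 * gamma)
  else (INR n - 1) * Rw / cn.

Definition hstar (n : nat) (Rw gamma : R) (c : nat -> R) (i : nat) : R :=
  let H := Hstar n Rw gamma c in
  H * (Rw - c i * H) / (Rw + gamma * H ^ 2).

Definition pistar (n : nat) (Rw gamma : R) (c : nat -> R) (i : nat) : R :=
  let H := Hstar n Rw gamma c in
  let hi := hstar n Rw gamma c i in
  Rw / H * hi - c i * hi - gamma / 2 * hi ^ 2.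

Definition profile (n : nat) (Rw gamma : R) (c : nat -> R) : nat -> R :=
  fun i => if Nat.leb i n then hstar n Rw gamma c i else 0.

(* n is the number of active miners of the (pure Nash) equilibrium at costs c:
   the closed-form profile is a Nash equilibrium and miners 1..n are active *)
Definition active_count (N n : nat) (Rw gamma : R) (c : nat -> R) : Prop :=
  is_NE N Rw gamma c (profile n Rw gamma c) /\
  forall i, (1 <= i <= n)%nat -> 0 < hstar n Rw gamma c i.

(* Main.v *)
Require Import Defs.
From Stdlib Require Import Reals Lra Lia.
From Coquelicot Require Import Coquelicot.
Open Scope R_scope.

Definition Hf (n : nat) (Rw g x : R) : R :=
  if Rlt_dec 0 g
  then (sqrt (x ^ 2 + 4 * (INR n - 1) * Rw * g) - x) / (2 * g)
  else (INR n - 1) * Rw / x.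

Definition Qf (Rw g a H : R) : R :=
  Rw / H * (H * (Rw - a * H) / (Rw + g * H ^ 2)) - a * (H * (Rw - a * H) / (Rw + g * H ^ 2))
  - g / 2 * (H * (Rw - a * H) / (Rw + g * H ^ 2)) ^ 2.

Lemma pistar_Q n Rw g c i : pistar n Rw g c i = Qf Rw g (c i) (Hf n Rw g (sum1 c n)).
Proof. reflexivity. Qed.

Lemma hstar_eq n Rw g c i : hstar n Rw g c i =
  Hf n Rw g (sum1 c n) * (Rw - c i * Hf n Rw g (sum1 c n)) / (Rw + g * Hf n Rw g (sum1 c n) ^ 2).
Proof. reflexivity. Qed.

Lemma sum1_upd_out c k t m : (m < k)%nat -> sum1 (upd c k t) m = sum1 c m.
Proof.
  induction m; intros; simpl; auto.
  rewrite IHm by lia. unfold upd. destruct (Nat.eqb_spec (S m) k); [lia|]. reflexivity.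
Qed.

Lemma sum1_upd c k t m : (1 <= k <= m)%nat -> sum1 (upd c k t) m = sum1 c m - c k + t.
Proof.
  induction m; intros Hk; [lia|]. simpl.
  destruct (Nat.eq_dec k (S m)) as [->|ne].
  - rewrite sum1_upd_out by lia. unfold upd. rewrite Nat.eqb_refl. ring.
  - rewrite IHm by lia. unfold upd. destruct (Nat.eqb_spec (S m) k); [lia|]. ring.
Qed.

Lemma sum1_nonneg f m : (forall k, (1 <= k <= m)%nat -> 0 <= f k) -> 0 <= sum1 f m.
Proof.
  induction m; intros Hf0; simpl; [lra|].
  assert (0 <= f (S m)) by (apply Hf0; lia).
  assert (0 <= sum1 f m) by (apply IHm; intros; apply Hf0; lia). lra.
Qed.

Lemma sum1_ge f m j : (forall k, (1 <= k <= m)%nat -> 0 <= f k) -> (1 <= j <= m)%nat ->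
  f j <= sum1 f m.
Proof.
  induction m; intros Hf0 Hj; [lia|]. simpl.
  destruct (Nat.eq_dec j (S m)) as [->|ne].
  - assert (0 <= sum1 f m) by (apply sum1_nonneg; intros; apply Hf0; lia). lra.
  - assert (f j <= sum1 f m) by (apply IHm; [intros; apply Hf0; lia | lia]).
    assert (0 <= f (S m)) by (apply Hf0; lia). lra.
Qed.

Lemma Hf_pos n Rw g x : (2 <= n)%nat -> 0 < Rw -> 0 <= g -> 0 < x -> 0 < Hf n Rw g x.
Proof.
  intros hn hR hg hx. unfold Hf.
  assert (1 <= INR n) by (apply (le_INR 1); lia).
  destruct (Rlt_dec 0 g).
  - apply Rdiv_lt_0_compat; [|lra].
    assert (x < sqrt (x ^ 2 + 4 * (INR n - 1) * Rw * g)); [|lra].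
    rewrite <- (sqrt_pow2 x) at 1 by lra. apply sqrt_lt_1_alt. split; [nra|].
    assert (2 <= INR n) by (apply (le_INR 2); lia).
    assert (0 < (INR n - 1) * Rw * g) by (repeat apply Rmult_lt_0_compat; lra). nra.
  - assert (2 <= INR n) by (apply (le_INR 2); lia).
    apply Rdiv_lt_0_compat; [|lra]. apply Rmult_lt_0_compat; lra.
Qed.

Lemma Hf_der n Rw g x : (2 <= n)%nat -> 0 < Rw -> 0 <= g -> 0 < x ->
  is_derive (Hf n Rw g) x (- Hf n Rw g x / (2 * g * Hf n Rw g x + x)).
Proof.
  intros hn hR hg hx.
  assert (2 <= INR n) by (apply (le_INR 2); lia).
  unfold Hf. destruct (Rlt_dec 0 g) as [gp|gn].
  - set (K := 4 * (INR n - 1) * Rw * g).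
    assert (0 < K) by (unfold K; repeat apply Rmult_lt_0_compat; lra).
    assert (Sp : 0 < sqrt (x ^ 2 + K)) by (apply sqrt_lt_R0; nra).
    auto_derive.
    + nra.
    + replace (2 * g * ((sqrt (x ^ 2 + K) - x) / (2 * g)) + x) with (sqrt (x ^ 2 + K)) by (field; lra).
      replace (x * (x * 1)) with (x ^ 2) by ring.
      field. lra.
  - assert (g = 0) by lra. subst g.
    auto_derive; [lra|]. field. lra.
Qed.

Theorem propositionB1 (N n : nat) (Rw gamma : R) (c : nat -> R) :
  (2 <= N)%nat ->
  (2 <= n <= N)%nat ->
  0 < Rw ->
  0 <= gamma ->
  (forall k, (1 <= k <= N)%nat -> 0 < c k) ->
  (forall k, (1 <= k < N)%nat -> c k <= c (S k)) ->
  active_count N n Rw gamma c ->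
  (* n does not change under small perturbations of the costs *)
  (exists delta, 0 < delta /\
     forall c' : nat -> R,
       (forall k, (1 <= k <= N)%nat -> 0 < c' k /\ Rabs (c' k - c k) < delta) ->
       active_count N n Rw gamma c') ->
  forall i j, (1 <= i <= n)%nat -> (1 <= j <= n)%nat -> i <> j ->
    (exists d, is_derive (fun t => pistar n Rw gamma (upd c i t) i) (c i) d /\ d < 0) /\
    (exists d, is_derive (fun t => pistar n Rw gamma (upd c j t) i) (c j) d /\ 0 < d).
Proof.
  intros hN hn hR hg hc _ [_ Hact] _ i j hi hj hij.
  set (C := sum1 c n).
  assert (cpos : forall k, (1 <= k <= n)%nat -> 0 < c k) by (intros; apply hc; lia).
  assert (ci : 0 < c i) by auto.
  assert (cj : 0 < c j) by auto.
  assert (hCi : c i + c j <= C).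
  { unfold C. rewrite <- (Rplus_0_r (sum1 c n)), <- (Rminus_diag (c i)).
    assert (c j <= sum1 (upd c i 0) n).
    { replace (c j) with (upd c i 0 j) by (unfold upd; destruct (Nat.eqb_spec j i); [lia|auto]).
      apply sum1_ge; [|lia]. intros k hk. unfold upd. destruct (Nat.eqb k i); [lra|].
      left; auto. }
    rewrite sum1_upd in H by lia. lra. }
  assert (Cp : 0 < C) by lra.
  set (H := Hf n Rw gamma C).
  assert (Hp : 0 < H) by (apply Hf_pos; lia || lra).
  set (D := Rw + gamma * H ^ 2).
  assert (Dp : 0 < D) by (unfold D; nra).
  set (u := Rw - c i * H).
  assert (up : 0 < u).
  { assert (h := Hact i hi). rewrite hstar_eq in h. fold C H in h. fold u D in h.
    apply Rmult_lt_reg_r with (H / D). apply Rdiv_lt_0_compat; lra.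
    replace (u * (H / D)) with (H * u / D) by (field; lra). lra. }
  assert (Pp : 0 < 2 * gamma * H + C) by nra.
  assert (HD := Hf_der n Rw gamma C ltac:(lia) hR hg Cp). fold H in HD.
  split.
  - exists (H * u * ((c i - C) * (2 * Rw + gamma * H ^ 2) * D
        + gamma * H * (u * (3 * Rw + gamma * H ^ 2) - 2 * (2 * Rw + gamma * H ^ 2) * D))
        / ((2 * gamma * H + C) * D ^ 3)).
    split.
    + apply is_derive_ext with (fun t => Qf Rw gamma t (Hf n Rw gamma (C - c i + t))).
      { intros t. rewrite pistar_Q, sum1_upd by lia. unfold upd. rewrite Nat.eqb_refl. reflexivity. }
      unfold Qf. auto_derive.
      * replace (C - c i + c i) with C by ring. fold H.
        repeat split; try (exists (- H / (2 * gamma * H + C)); exact HD); try lra; nra.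
      * replace (C - c i + c i) with C by ring. fold H.
        replace (Derive (fun x : R => Hf n Rw gamma x) C) with (- H / (2 * gamma * H + C)) by (symmetry; apply is_derive_unique; exact HD).
        unfold u, D. field. fold D. repeat split; lra.
    + assert (G1 : 0 < (2 * Rw + gamma * H ^ 2) * D) by (apply Rmult_lt_0_compat; nra).
      assert (T1 : (c i - C) * (2 * Rw + gamma * H ^ 2) * D < 0).
      { rewrite Rmult_assoc. apply Rmult_neg_pos; lra. }
      assert (uR : u < Rw) by (unfold u; nra).
      assert (E0 : 0 <= gamma * H ^ 2) by (apply Rmult_le_pos; [lra| apply pow_le; lra]).
      assert (I1 : u * (3 * Rw + gamma * H ^ 2) <= Rw * (3 * Rw + gamma * H ^ 2)) by (apply Rmult_le_compat_r; lra).
      assert (I2 : Rw * (3 * Rw + gamma * H ^ 2) <= 2 * (2 * Rw + gamma * H ^ 2) * D) by (unfold D; nra).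
      assert (T2 : gamma * H * (u * (3 * Rw + gamma * H ^ 2) - 2 * (2 * Rw + gamma * H ^ 2) * D) <= 0).
      { assert (0 <= gamma * H) by nra. nra. }
      assert (Den : 0 < / ((2 * gamma * H + C) * D ^ 3)).
      { apply Rinv_0_lt_compat. apply Rmult_lt_0_compat; [lra| apply pow_lt; lra]. }
      assert (0 < H * u) by nra.
      unfold Rdiv. apply Rmult_neg_pos; [|exact Den].
      apply Rmult_pos_neg; [lra|lra].
  - exists (H * u * (c i * (2 * Rw + gamma * H ^ 2) * D + u * gamma * H * (3 * Rw + gamma * H ^ 2))
        / ((2 * gamma * H + C) * D ^ 3)).
    split.
    + apply is_derive_ext with (fun t => Qf Rw gamma (c i) (Hf n Rw gamma (C - c j + t))).
      { intros t. rewrite pistar_Q, sum1_upd by lia. unfold upd.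
        destruct (Nat.eqb_spec i j); [lia|]. reflexivity. }
      unfold Qf. auto_derive.
      * replace (C - c j + c j) with C by ring. fold H.
        repeat split; try (exists (- H / (2 * gamma * H + C)); exact HD); try lra; nra.
      * replace (C - c j + c j) with C by ring. fold H.
        replace (Derive (fun x : R => Hf n Rw gamma x) C) with (- H / (2 * gamma * H + C)) by (symmetry; apply is_derive_unique; exact HD).
        unfold u, D. field. fold D. repeat split; lra.
    + assert (E0 : 0 <= gamma * H ^ 2) by (apply Rmult_le_pos; [lra| apply pow_le; lra]).
      assert (G1 : 0 < c i * (2 * Rw + gamma * H ^ 2) * D) by (apply Rmult_lt_0_compat; [apply Rmult_lt_0_compat|]; lra).
      assert (G2 : 0 <= u * gamma * H * (3 * Rw + gamma * H ^ 2)).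
      { apply Rmult_le_pos; [|lra]. apply Rmult_le_pos; [|lra]. apply Rmult_le_pos; lra. }
      apply Rdiv_lt_0_compat.
      * apply Rmult_lt_0_compat; [apply Rmult_lt_0_compat|]; lra.
      * apply Rmult_lt_0_compat; [lra| apply pow_lt; lra].
Qed.
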